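(* Let $c\ge2$, $d\ge c$. Let $\mathbb E\Gamma=[\mathbb E\gamma_1,\dots,\mathbb E\gamma_c]\in\mathbb R^{d\times c}$ and server vectors $\gamma_1,\dots,\gamma_c\in\mathbb R^d$, let $\hat{\mathcal P}$ be an affine subspace of $\mathbb R^d$, $\Pi_{\hat{\mathcal P}}(\Gamma)=[\Pi_{\hat{\mathcal P}}(\gamma_1),\dots,\Pi_{\hat{\mathcal P}}(\gamma_c)]$ and $\Delta\Gamma=\Pi_{\hat{\mathcal P}}(\Gamma)-\mathbb E\Gamma$. Assume the $(c-1)$-th largest singular value of $\mathbb E\Gamma\,(I-\frac1c\mathbf 1\mathbf 1^\top)$ is at least $\sigma_s$, and that $\|\Delta\Gamma\|_2<\sigma_s$ (spectral norm). Let $g_h\in\mathbb R^d$ and $\mathbb Eg_h\in\mathbb R^d$, let $p_h\in\mathbb R^c$ be a probability vector with $\mathbb E\Gamma\,p_h=\mathbb Eg_h$, and let $\hat p_h\in\mathbb R^c$ satisfy $\Pi_{\hat{\mathcal P}}(\Gamma)\hat p_h=\Pi_{\hat{\mathcal P}}(g_h)$ and $\mathbf 1^\top\hat p_h=1$. Writing $\Delta g_h=\Pi_{\hat{\mathcal P}}(g_h)-\mathbb Eg_h$, $$\|\hat p_h-p_h\|_2\le\frac{\|\Delta g_h\|_2+\sqrt2\,\|\Delta\Gamma\|_2}{\sigma_s-\|\Delta\Gamma\|_2}.$$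
   Context: For an affine subspace $\mathcal P=\{U\lambda+m\}$ ($U$ with orthonormal columns), $\Pi_{\mathcal P}(w)=UU^\top(w-m)+m$ is its orthogonal projection. $\mathbf 1\in\mathbb R^c$ is the all-ones vector. *)

(* Defs.v *)
From HB Require Import structures.
From mathcomp Require Import all_boot all_order all_algebra.
From mathcomp Require Import all_classical all_reals.
Set Implicit Arguments. Unset Strict Implicit. Unset Printing Implicit Defensive.
Import Order.TTheory GRing.Theory Num.Theory.
Local Open Scope ring_scope.

Definition norm2 {R : realType} {n : nat} (v : 'cV[R]_n) : R :=
  Num.sqrt (\sum_i (v i 0) ^+ 2).

Definition spec_norm {R : realType} {m n : nat} (A : 'M[R]_(m, n)) : R :=
  sup [set e : R | exists x : 'cV[R]_n, norm2 x = 1 /\ e = norm2 (A *m x)].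

(* s is the list of eigenvalues (with multiplicity) of A^T A, sorted in
   non-increasing order; the singular values of A are then the Num.sqrt s`_k,
   the k-th largest being Num.sqrt s`_(k-1). *)
Definition sq_sing_vals {R : realType} {m n : nat} (A : 'M[R]_(m, n)) (s : seq R)
  : Prop :=
  [/\ sorted (fun x y : R => y <= x) s, size s = n &
      char_poly (A^T *m A) = \prod_(x <- s) ('X - x%:P)].

(* orthogonal projection onto the affine subspace {U l + m0} (U orthonormal cols) *)
Definition aproj {R : realType} {d k : nat} (U : 'M[R]_(d, k)) (m0 : 'cV[R]_d)
  (w : 'cV[R]_d) : 'cV[R]_d := U *m U^T *m (w - m0) + m0.

Definition aprojmx {R : realType} {d k c : nat} (U : 'M[R]_(d, k)) (m0 : 'cV[R]_d)
  (G : 'M[R]_(d, c)) : 'M[R]_(d, c) :=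
  \matrix_(i, j) (aproj U m0 (col j G)) i 0.

Definition centering {R : realType} (c : nat) : 'M[R]_c :=
  1%:M - (c%:R)^-1 *: const_mx 1.

(* Main.v *)
Require Import Defs.
From HB Require Import structures.
From mathcomp Require Import all_boot all_order all_algebra.
From mathcomp Require Import all_classical all_reals.
From mathcomp Require Import complex spectral.
From mathcomp Require Import ring lra zify.
Import Order.TTheory GRing.Theory Num.Theory.
Set Implicit Arguments. Unset Strict Implicit. Unset Printing Implicit Defensive.
Local Open Scope ring_scope.
Section Norms.
Variable R : realType.

Lemma CS n (a b : 'I_n -> R) :
  (\sum_i a i * b i)^+2 <= (\sum_i a i ^+2) * (\sum_i b i ^+2).
Proof.
have A0 : 0 <= \sum_i a i ^+ 2 by apply: sumr_ge0 => i _; exact: sqr_ge0.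
have B0 : 0 <= \sum_i b i ^+ 2 by apply: sumr_ge0 => i _; exact: sqr_ge0.
have [A00|Apos] := eqVneq (\sum_i a i ^+ 2) 0.
  have ai : forall i, a i = 0.
    move=> i; apply/eqP; rewrite -sqrf_eq0; apply/eqP.
    by apply: (psumr_eq0P (P:=predT) _ A00) => // j _; exact: sqr_ge0.
  have -> : \sum_i a i * b i = 0 by rewrite big1 // => i _; rewrite ai mul0r.
  by rewrite expr2 mul0r; apply: mulr_ge0.
have Ap : 0 < \sum_i a i ^+ 2 by rewrite lt_def Apos A0.
have : 0 <= \sum_i ((\sum_i a i * b i) * a i - (\sum_i a i ^+ 2) * b i)^+2.
  by apply: sumr_ge0 => i _; exact: sqr_ge0.
have e : forall i, ((\sum_i a i * b i) * a i - (\sum_i a i ^+ 2) * b i)^+2 =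
   (\sum_i a i * b i)^+2 * a i^+2 - (2 * (\sum_i a i * b i) * (\sum_i a i ^+ 2)) * (a i * b i)
   + (\sum_i a i ^+ 2)^+2 * b i^+2 by move=> i; ring.
rewrite (eq_bigr _ (fun i _ => e i)) big_split big_split /= sumrN -!mulr_sumr.
set A := \sum_i a i ^+ 2; set Bs := \sum_i b i ^+ 2; set Cc := \sum_i a i * b i.
move=> h; rewrite -subr_ge0 -(pmulr_rge0 _ Ap).
have -> : A * (A * Bs - Cc ^+ 2) = Cc ^+ 2 * A - 2 * Cc * A * Cc + A ^+ 2 * Bs by ring.
exact: h.
Qed.

Lemma ss_ge0 n (v : 'cV[R]_n) : 0 <= \sum_i (v i 0)^+2.
Proof. by apply: sumr_ge0 => i _; exact: sqr_ge0. Qed.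

Lemma norm2_ge0 n (v : 'cV[R]_n) : 0 <= norm2 v.
Proof. exact: sqrtr_ge0. Qed.

Lemma norm2_sq n (v : 'cV[R]_n) : norm2 v ^+ 2 = \sum_i (v i 0)^+2.
Proof. by rewrite /norm2 sqr_sqrtr // ss_ge0. Qed.

Lemma norm2D n (u v : 'cV[R]_n) : norm2 (u + v) <= norm2 u + norm2 v.
Proof.
have hu := norm2_ge0 u; have hv := norm2_ge0 v.
rewrite -(@ler_pXn2r _ 2) ?nnegrE ?addr_ge0 //.
rewrite norm2_sq.
have -> : \sum_i ((u + v) i 0)^+2 =
   \sum_i (u i 0)^+2 + 2 * \sum_i (u i 0 * v i 0) + \sum_i (v i 0)^+2.
  rewrite mulr_sumr -!big_split /=; apply: eq_bigr => i _; rewrite mxE; ring.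
have cs := CS (fun i => u i 0) (fun i => v i 0).
rewrite -!norm2_sq in cs.
have : \sum_i u i 0 * v i 0 <= norm2 u * norm2 v.
  have h : `|\sum_i u i 0 * v i 0| <= norm2 u * norm2 v.
    rewrite -sqrtr_sqr -(ger0_norm hu) -(ger0_norm hv) -!sqrtr_sqr -sqrtrM ?sqr_ge0 //.
    by rewrite ler_sqrt ?mulr_ge0 ?sqr_ge0.
  exact: le_trans (ler_norm _) h.
rewrite -!norm2_sq; first nra.
exact: norm2_ge0.
Qed.

Lemma norm2Z n a (v : 'cV[R]_n) : norm2 (a *: v) = `|a| * norm2 v.
Proof.
rewrite /norm2 -sqrtr_sqr -sqrtrM ?sqr_ge0 // mulr_sumr.
by congr Num.sqrt; apply: eq_bigr => i _; rewrite mxE exprMn.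
Qed.

Lemma norm2N n (v : 'cV[R]_n) : norm2 (- v) = norm2 v.
Proof. by rewrite -scaleN1r norm2Z normrN normr1 mul1r. Qed.

Lemma norm2_eq0 n (v : 'cV[R]_n) : norm2 v = 0 -> v = 0.
Proof.
move=> /eqP; rewrite sqrtr_eq0 => h.
have h0 : \sum_i (v i 0)^+2 = 0 by apply/eqP; rewrite eq_le h ss_ge0.
apply/matrixP => i j; rewrite ord1 mxE; apply/eqP; rewrite -sqrf_eq0; apply/eqP.
by apply: (psumr_eq0P (P:=predT) _ h0) => // k _; exact: sqr_ge0.
Qed.

End Norms.
Section Spec.
Variable R : realType.

Lemma sqr_abs (x : R) : `|x| ^+ 2 = x ^+ 2.
Proof. exact: real_normK (num_real _). Qed.

Lemma entry_le_norm2 n (v : 'cV[R]_n) i : `|v i 0| <= norm2 v.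
Proof.
rewrite -sqrtr_sqr /norm2 ler_sqrt ?ss_ge0 // (bigD1 i) //= lerDl.
by apply: sumr_ge0 => j _; exact: sqr_ge0.
Qed.

Lemma norm2_0 n : norm2 (0 : 'cV[R]_n) = 0.
Proof. by rewrite /norm2 big1 ?sqrtr0 // => i _; rewrite mxE expr0n. Qed.

Lemma spec_ub m n (A : 'M[R]_(m, n)) :
  has_ubound [set e : R | exists x : 'cV[R]_n, norm2 x = 1 /\ e = norm2 (A *m x)].
Proof.
exists (Num.sqrt (\sum_i (\sum_j `|A i j|) ^+ 2)) => e [x [x1 ->]].
rewrite /norm2 ler_sqrt; last by apply: sumr_ge0 => i _; exact: sqr_ge0.
apply: ler_sum => i _; rewrite -sqr_abs.
have r0 : 0 <= \sum_j `|A i j| by apply: sumr_ge0 => j _; exact: normr_ge0.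
rewrite ler_pXn2r ?nnegrE ?normr_ge0 //.
rewrite mxE; apply: le_trans (ler_norm_sum _ _ _) _; apply: ler_sum => j _.
rewrite normrM -[X in _ <= X]mulr1 ler_wpM2l // -x1; exact: entry_le_norm2.
Qed.

Lemma norm2_normalize n (x : 'cV[R]_n) : x != 0 ->
  0 < norm2 x /\ norm2 ((norm2 x)^-1 *: x) = 1.
Proof.
move=> x0; have nx0 : norm2 x != 0 by apply: contra x0 => /eqP/norm2_eq0 ->.
have nxp : 0 < norm2 x by rewrite lt_def nx0 norm2_ge0.
split => //; rewrite norm2Z ger0_norm ?invr_ge0 ?norm2_ge0 // mulVf //.
Qed.

Lemma spec_bound m n (A : 'M[R]_(m, n)) (x : 'cV[R]_n) :
  norm2 (A *m x) <= spec_norm A * norm2 x.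
Proof.
have [->|x0] := eqVneq x 0; first by rewrite mulmx0 !norm2_0 mulr0.
have [nxp n1] := norm2_normalize x0.
have : norm2 (A *m ((norm2 x)^-1 *: x)) <= spec_norm A.
  by apply: (ub_le_sup (spec_ub A)); exists ((norm2 x)^-1 *: x).
rewrite -scalemxAr norm2Z ger0_norm ?invr_ge0 ?norm2_ge0 // => h.
rewrite -(mulfVK (lt0r_neq0 nxp) (norm2 (A *m x))) mulrC.
rewrite mulrC; apply: ler_wpM2r; [exact: norm2_ge0|by rewrite mulrC].
Qed.

Lemma spec_ge0 m n (A : 'M[R]_(m, n)) : (0 < n)%N -> 0 <= spec_norm A.
Proof.
move=> n0; have x0 : (const_mx 1 : 'cV[R]_n) != 0.
  apply/negP => /eqP/matrixP/(_ (Ordinal n0) 0); rewrite !mxE => /eqP.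
  by rewrite oner_eq0.
have [nxp n1] := norm2_normalize x0.
apply: le_trans (norm2_ge0 (A *m ((norm2 (const_mx 1 : 'cV[R]_n))^-1 *: const_mx 1))) _.
by apply: (ub_le_sup (spec_ub A)); eexists; split; [exact: n1|].
Qed.

End Spec.
Lemma char_poly_similar (F : fieldType) n (P A : 'M[F]_n) : P \in unitmx ->
  char_poly (invmx P *m A *m P) = char_poly A.
Proof.
move=> uP.
have e : char_poly_mx (invmx P *m A *m P) =
  map_mx polyC (invmx P) *m char_poly_mx A *m map_mx polyC P.
  rewrite /char_poly_mx mulmxBr mulmxBl -!map_mxM; congr (_ - _).
  by rewrite mul_mx_scalar -scalemxAl -map_mxM mulVmx // map_mx1 scalemx1.
rewrite /char_poly e !det_mulmx !det_map_mx mulrC mulrA -rmorphM.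
by rewrite -det_mulmx mulmxV // det1 rmorph1 mul1r.
Qed.
Section Key.
Variable R : realType.
Local Notation phi := (real_complex R).

Lemma conj_phi_mx m n (B : 'M[R]_(m, n)) :
  map_mx Num.conj (map_mx phi B) = map_mx phi B.
Proof. by apply/matrixP => i j; rewrite !mxE; exact: conjc_real. Qed.

Lemma key n (M : 'M[R]_n) (s : seq R) (v x : 'cV[R]_n) :
  (2 <= n)%N -> M^T = M -> size s = n -> sorted (fun a b : R => b <= a) s ->
  char_poly M = \prod_(y <- s) ('X - y%:P) ->
  M *m v = 0 -> v != 0 -> v^T *m x = 0 -> 0 < s`_(n-2) ->
  s`_(n-2) * (x^T *m x) 0 0 <= (x^T *m M *m x) 0 0.
Proof.
move=> n2 MT ss srt cp Mv v0 vx lam0.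
set lam := s`_(n-2) in lam0 *.
set Mc := map_mx phi M.
have Mn : Mc \is normalmx.
  have Mct : map_mx Num.conj Mc^T = Mc.
    apply/matrixP => i j; rewrite !mxE; have -> : M j i = M i j by rewrite -{1}MT mxE.
    exact: conjc_real.
  by apply/normalmxP; rewrite Mct.
move/orthomx_spectralP: Mn => eqM.
set P := spectralmx Mc in eqM *. set D := spectral_diag Mc in eqM *.
have Pu : P \is unitarymx := spectral_unitarymx Mc.
have Punit : P \in unitmx := unitarymx_unit Pu.
have Pinv : invmx P = map_mx Num.conj P^T := invmx_unitary Pu.
set xc := map_mx phi x; set vc := map_mx phi v.
set w := P *m xc; set u := P *m vc.
have xct : map_mx Num.conj xc^T = xc^T by rewrite /xc -map_trmx conj_phi_mx.
have wt : map_mx Num.conj w^T = xc^T *m invmx P.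
  by rewrite /w trmx_mul map_mxM Pinv xct.
have E1 : phi ((x^T *m M *m x) 0 0) = \sum_i Num.conj (w i 0) * D 0 i * w i 0.
  have : map_mx phi (x^T *m M *m x) = map_mx Num.conj w^T *m diag_mx D *m w.
    by rewrite wt !map_mxM map_trmx -/Mc -/xc eqM /w !mulmxA.
  move/(congr1 (fun B : 'M_(1,1) => B 0 0)); rewrite mxE => ->.
  rewrite mxE; apply: eq_bigr => i _; rewrite mul_mx_diag !mxE.
  done.
have E2 : phi ((x^T *m x) 0 0) = \sum_i Num.conj (w i 0) * w i 0.
  have : map_mx phi (x^T *m x) = map_mx Num.conj w^T *m w.
    by rewrite wt map_mxM map_trmx -/xc /w mulmxA mulmxKV.
  move/(congr1 (fun B : 'M_(1,1) => B 0 0)); rewrite mxE => ->.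
  by rewrite mxE; apply: eq_bigr => i _; rewrite !mxE.
have E3 : \sum_i Num.conj (w i 0) * u i 0 = 0.
  have : map_mx phi (x^T *m v) = map_mx Num.conj w^T *m u.
    by rewrite wt map_mxM map_trmx -/xc /u mulmxA mulmxKV.
  have -> : x^T *m v = 0 by rewrite -[x^T *m v]trmxK trmx_mul trmxK vx trmx0.
  rewrite map_mx0 => h; transitivity ((map_mx Num.conj w^T *m u) 0 0).
    by rewrite mxE; apply: eq_bigr => i _; rewrite !mxE.
  by rewrite -h mxE.
have Du : forall i, D 0 i * u i 0 = 0.
  have : diag_mx D *m u = 0.
    have h : Mc *m vc = 0 by rewrite /Mc /vc -map_mxM Mv map_mx0.
    have := congr1 (mulmx P) h; rewrite eqM mulmx0 -!mulmxA mulKVmx //.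
  by move=> h i; have := congr1 (fun B : 'cV_n => B i 0) h; rewrite mul_diag_mx !mxE.
have u0 : u != 0.
  apply: contra v0 => /eqP uz.
  have vc0 : vc = 0 by rewrite -(mulKmx Punit vc) -/u uz mulmx0.
  by apply/eqP; apply: (@map_mx_inj _ _ phi); rewrite map_mx0.
have [j0 uj0] : exists j, u j 0 != 0.
  case/boolP: [exists j, u j 0 != 0] => [/existsP//|/existsPn h].
  case/negP: u0; apply/eqP/matrixP => i j; rewrite ord1.
  by have := h i; rewrite negbK => /eqP ->; rewrite mxE.
have Dj0 : D 0 j0 = 0.
  by have /eqP := Du j0; rewrite mulf_eq0 (negbTE uj0) orbF => /eqP.
have cpc : char_poly Mc = \prod_(y <- map phi s) ('X - y%:P).
  rewrite -map_char_poly cp rmorph_prod big_map; apply: eq_bigr => y _.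
  by rewrite rmorphB /= map_polyX map_polyC.
have cpd : char_poly Mc = \prod_(i < n) ('X - (D 0 i)%:P).
  rewrite {1}eqM char_poly_similar // char_poly_trig ?diag_mx_is_trig //.
  by apply: eq_bigr => i _; rewrite mxE eqxx mulr1n.
have pe : perm_eq [seq D 0 i | i <- enum 'I_n] (map phi s).
  apply: prod_XsubC_eq; rewrite big_map -cpc cpd big_enum //.
pose a := fun z : R[i] => ~~ (phi lam <= z).
have cnt1 : (count a (map phi s) <= 1)%N.
  rewrite count_map (@eq_count _ _ (fun y => ~~ (lam <= y))); last first.
    by move=> y; rewrite /a /= lecR.
  rewrite -(cat_take_drop (n - 1) s) count_cat.
  have -> : count (fun y => ~~ (lam <= y)) (take (n - 1) s) = 0%N.
    apply/eqP; rewrite -leqn0 leqNgt -has_count; apply/hasPn => y /(nthP 0) [k].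
    rewrite size_take ss (_ : (n - 1 < n)%N); last by lia.
    move=> kl <-; rewrite nth_take // negbK /lam.
    apply: (sorted_leq_nth (leT := fun a b : R => b <= a)).
    - by move=> a1 b1 c1 h1 h2; exact: le_trans h2 h1.
    - by move=> a1; exact: lexx.
    - exact: srt.
    - by rewrite inE ss; lia.
    - by rewrite inE ss; lia.
    - by lia.
  by rewrite add0n; apply: leq_trans (count_size _ _) _; rewrite size_drop ss; lia.
have lam0c : 0 < phi lam by rewrite -(rmorph0 phi) ltcR.
have geq : forall i, i != j0 -> phi lam <= D 0 i.
  move=> i ij; apply/negPn/negP => Hi.
  have : (1 < count a [seq D ord0 k | k <- enum 'I_n])%N.
    rewrite count_map.
    have -> : count (preim (fun k => D 0 k) a) (enum 'I_n) =
       #|[pred k | a (D 0 k)]| by rewrite cardE -size_filter enumT.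
    apply/card_gt1P; exists i, j0; split => //; rewrite inE /a Dj0.
    by rewrite lt_geF.
  by move/permP: pe => ->; rewrite ltnNge cnt1.
have ui : forall i, i != j0 -> u i 0 = 0.
  move=> i ij; have /eqP := Du i; rewrite mulf_eq0 => /orP [/eqP Di|/eqP //].
  by have := geq i ij; rewrite Di lt_geF.
have wj0 : Num.conj (w j0 0) = 0.
  move: E3; rewrite (bigD1 j0) //= big1 ?addr0; last by move=> i ij; rewrite ui // mulr0.
  by move/eqP; rewrite mulf_eq0 (negbTE uj0) orbF => /eqP.
rewrite -lecR rmorphM; change (phi lam * phi ((x^T *m x) 0 0) <= phi ((x^T *m M *m x) 0 0)).
rewrite E1 E2 mulr_sumr; apply: ler_sum => i _.
have [->|ij] := eqVneq i j0; first by rewrite wj0 !mul0r mulr0.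
rewrite mulrAC [X in _ <= X]mulrC; apply: ler_wpM2r (geq i ij).
by rewrite mulrC mul_conjC_ge0.
Qed.
End Key.
Section Main.
Variable R : realType.

Lemma tr_mul_self n (y : 'cV[R]_n) : (y^T *m y) 0 0 = norm2 y ^+ 2.
Proof. by rewrite norm2_sq mxE; apply: eq_bigr => i _; rewrite mxE expr2. Qed.

Lemma centering_ones c : (0 < c)%N ->
  centering c *m (const_mx 1 : 'cV[R]_c) = 0.
Proof.
move=> c0; rewrite /centering mulmxBl mul1mx -scalemxAl.
have -> : (const_mx 1 : 'M[R]_c) *m (const_mx 1 : 'cV[R]_c) = c%:R *: const_mx 1.
  apply/matrixP => i j; rewrite !mxE.
  under eq_bigr do rewrite !mxE mulr1.
  by rewrite sumr_const card_ord mulr1.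
by rewrite scalerA mulVf ?pnatr_eq0 -?lt0n // scale1r subrr.
Qed.

Lemma centering_fix c (e : 'cV[R]_c) : \sum_i e i 0 = 0 -> centering c *m e = e.
Proof.
move=> se; rewrite /centering mulmxBl mul1mx -scalemxAl.
have -> : (const_mx 1 : 'M[R]_c) *m e = 0.
  apply/matrixP => i j; rewrite !mxE ord1 -[RHS]se.
  by apply: eq_bigr => k _; rewrite mxE mul1r.
by rewrite scaler0 subr0.
Qed.


Lemma lower_bound d c (A : 'M[R]_(d, c)) (sigma : R) (e : 'cV[R]_c) :
  (2 <= c)%N ->
  (exists s : seq R, sq_sing_vals (A *m centering c) s /\
                     sigma <= Num.sqrt (s`_(c - 2))) ->
  \sum_i e i 0 = 0 -> sigma * norm2 e <= norm2 (A *m e).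
Proof.
move=> c2 [s [[srt ss cp] hs]] se.
have [sig0|sigp] := lerP sigma 0.
  by apply: le_trans (norm2_ge0 _); apply: mulr_le0_ge0 => //; exact: norm2_ge0.
have lam0 : 0 < s`_(c - 2).
  rewrite ltNge; apply/negP => h.
  by move: (lt_le_trans sigp hs); rewrite ler0_sqrtr // ltxx.
set B := A *m centering c.
have c0 : (0 < c)%N by lia.
have Bv : B *m (const_mx 1 : 'cV[R]_c) = 0.
  by rewrite /B -mulmxA centering_ones // mulmx0.
have MT : (B^T *m B)^T = B^T *m B by rewrite trmx_mul trmxK.
have Mv : B^T *m B *m (const_mx 1 : 'cV[R]_c) = 0 by rewrite -mulmxA Bv mulmx0.
have v0 : (const_mx 1 : 'cV[R]_c) != 0.
  apply/negP => /eqP/matrixP/(_ (Ordinal c0) 0); rewrite !mxE => /eqP.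
  by rewrite oner_eq0.
have ve : (const_mx 1 : 'cV[R]_c)^T *m e = 0.
  apply/matrixP => i j; rewrite !ord1 !mxE -[RHS]se.
  by apply: eq_bigr => k0 _; rewrite !mxE mul1r.
have := @key R c (B^T *m B) s (const_mx 1) e c2 MT ss srt cp Mv v0 ve lam0.
have Be : B *m e = A *m e by rewrite /B -mulmxA centering_fix.
have eq1 : e^T *m (B^T *m B) *m e = (B *m e)^T *m (B *m e).
  by rewrite [(B *m e)^T]trmx_mul !mulmxA.
rewrite eq1.
rewrite Be !tr_mul_self => h.
have ne0 := norm2_ge0 e; have nae0 := norm2_ge0 (A *m e).
rewrite -(@ler_pXn2r _ 2) ?nnegrE //; last by apply: mulr_ge0 => //; exact: ltW.
have hs2 : sigma ^+ 2 <= s`_(c - 2).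
  rewrite -(sqr_sqrtr (ltW lam0)) ler_pXn2r ?nnegrE ?sqrtr_ge0 ?(ltW sigp) //.
rewrite exprMn; apply: (le_trans _ h).
by apply: ler_wpM2r => //; exact: sqr_ge0.
Qed.
End Main.
Theorem mainTheorem11 (R : realType) (c d k : nat) (hc : (2 <= c)%N) (hd : (c <= d)%N)
  (EGam Gam : 'M[R]_(d, c)) (U : 'M[R]_(d, k)) (m0 : 'cV[R]_d)
  (hU : U^T *m U = 1%:M) (sigma_s : R)
  (hsig : exists s : seq R, sq_sing_vals (EGam *m centering c) s /\
                             sigma_s <= Num.sqrt (s`_(c - 2)))
  (hDG : spec_norm (aprojmx U m0 Gam - EGam) < sigma_s)
  (g Eg : 'cV[R]_d) (p phat : 'cV[R]_c)
  (hp0 : forall i, 0 <= p i 0) (hp1 : \sum_i p i 0 = 1)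
  (hp : EGam *m p = Eg)
  (hphat : aprojmx U m0 Gam *m phat = aproj U m0 g)
  (hphat1 : \sum_i phat i 0 = 1) :
  norm2 (phat - p) <=
    (norm2 (aproj U m0 g - Eg) + Num.sqrt 2 * spec_norm (aprojmx U m0 Gam - EGam))
    / (sigma_s - spec_norm (aprojmx U m0 Gam - EGam)).
Proof.
set Ah := aprojmx U m0 Gam; set Dl := Ah - EGam; set S := spec_norm Dl.
set e := phat - p.
have se : \sum_i e i 0 = 0.
  rewrite /e; under eq_bigr do rewrite !mxE.
  by rewrite sumrB hphat1 hp1 subrr.
have lb := lower_bound hc hsig se.
have Ae : EGam *m e = (aproj U m0 g - Eg) + (- (Dl *m p)) + (- (Dl *m e)).
  rewrite /Dl /e !mulmxBl !mulmxBr hphat hp.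
  by apply/matrixP => i j; rewrite !mxE; ring.
have c0 : (0 < c)%N by lia.
have S0 : 0 <= S := spec_ge0 Dl c0.
have np : norm2 p <= 1.
  have pi1 : forall i, p i 0 <= 1.
    move=> i; rewrite -hp1 (bigD1 i) //= lerDl.
    by apply: sumr_ge0 => j _; exact: hp0.
  rewrite /norm2 -[X in _ <= X]sqrtr1 ler_sqrt // -hp1; apply: ler_sum => i _.
  by rewrite expr2 ler_piMr.
have ub : norm2 (EGam *m e) <= norm2 (aproj U m0 g - Eg) + S * norm2 p + S * norm2 e.
  rewrite Ae; apply: le_trans (norm2D _ _) _; rewrite norm2N; apply: lerD; last exact: spec_bound.
  apply: le_trans (norm2D _ _) _; rewrite norm2N; apply: lerD => //; exact: spec_bound.
have s2 : 1 <= Num.sqrt 2 :> R.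
  by rewrite -[X in X <= _]sqrtr1 ler_sqrt // ler1n.
have ne0 := norm2_ge0 e; have ng0 := norm2_ge0 (aproj U m0 g - Eg).
have Sp : S * norm2 p <= S by rewrite -[X in _ <= X]mulr1 ler_wpM2l.
have S2 : S <= Num.sqrt 2 * S by rewrite -[X in X <= _]mul1r ler_wpM2r.
rewrite ler_pdivlMr ?subr_gt0 //.
nra.
Qed.
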